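(* For every positive integer $n$, \[u(n,n+2)=\varepsilon(n,n+2)=\left\lfloor\frac{2n+4}{3}\right\rfloor.\]
   Context: All matrices are binary. For a nonempty set $S$ of columns of a binary matrix, let $z$ be the sum over the integers of the columns in $S$. $S$ is called $1$-free if no entry of $z$ equals $1$, and even if all entries of $z$ are even. For a binary $m\times n$ matrix $A$ with $m<n$: $\varepsilon(A)$ is the smallest cardinality of a nonempty even set of columns, and $u(A)$ the smallest cardinality of a nonempty $1$-free set of columns. For $m<n$, $\varepsilon(m,n)$ and $u(m,n)$ are the maxima of $\varepsilon(A)$, resp. $u(A)$, over all binary $m\times n$ matrices. *)

(* Defs.v *)
From mathcomp Require Import all_boot all_algebra.
Set Implicit Arguments. Unset Strict Implicit. Unset Printing Implicit Defensive.

Definition colsum (m n : nat) (A : 'M[bool]_(m, n)) (S : {set 'I_n}) (i : 'I_m) : nat :=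
  #|[set j in S | A i j]|.

Definition even_set (m n : nat) (A : 'M[bool]_(m, n)) (S : {set 'I_n}) : bool :=
  (S != set0) && [forall i, ~~ odd (colsum A S i)].

Definition one_free_set (m n : nat) (A : 'M[bool]_(m, n)) (S : {set 'I_n}) : bool :=
  (S != set0) && [forall i, colsum A S i != 1%N].

(* smallest cardinality of a nonempty even (resp. 1-free) set of columns;
   the default value n.+1 is never attained when m < n (such sets exist). *)
Definition epsA (m n : nat) (A : 'M[bool]_(m, n)) : nat :=
  \big[minn/n.+1]_(S : {set 'I_n} | even_set A S) #|S|.

Definition uA (m n : nat) (A : 'M[bool]_(m, n)) : nat :=
  \big[minn/n.+1]_(S : {set 'I_n} | one_free_set A S) #|S|.

Definition eps_mn (m n : nat) : nat := \max_(A : 'M[bool]_(m, n)) epsA A.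
Definition u_mn (m n : nat) : nat := \max_(A : 'M[bool]_(m, n)) uA A.

(* Main.v *)
Require Import Defs.
From mathcomp Require Import all_boot all_algebra zify.
Set Implicit Arguments. Unset Strict Implicit. Unset Printing Implicit Defensive.

Lemma bigmin_le (T : finType) (P : pred T) (F : T -> nat) x (X : T) :
  P X -> \big[minn/x]_(S | P S) F S <= F X.
Proof.
move=> PX; rewrite /index_enum; have : X \in Finite.enum T by rewrite -enumT mem_enum.
elim: (Finite.enum T) => [//|y r IH]; rewrite in_cons big_cons.
case/orP=> [/eqP<-|/IH H]; first by rewrite PX geq_minl.
by case: (P y) => //; rewrite geq_min H orbT.
Qed.

Lemma bigmin_ge (T : finType) (P : pred T) (F : T -> nat) x B :
  B <= x -> (forall S, P S -> B <= F S) -> B <= \big[minn/x]_(S | P S) F S.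
Proof.
move=> Bx H; apply: (big_ind (fun v => B <= v)) => //.
by move=> a b Ha Hb; rewrite leq_min Ha Hb.
Qed.

Lemma even_one_free m n (A : 'M[bool]_(m, n)) S : even_set A S -> one_free_set A S.
Proof.
rewrite /even_set /one_free_set; case/andP=> -> /forallP H; apply/forallP => i; apply/negP => /eqP E.
by move: (H i); rewrite E.
Qed.

Lemma colsumE m n (A : 'M[bool]_(m, n)) S i :
  colsum A S i = \sum_j ((j \in S) && A i j).
Proof.
rewrite /colsum -sum1_card big_mkcond /=; apply: eq_bigr => j _.
by rewrite inE; case: (_ && _).
Qed.

Lemma fiber3 (T U : finType) (f : T -> U) : 2 * #|U| < #|T| ->
  exists y, 2 < #|[set x | f x == y]|.
Proof.
move=> H; case: (boolP [exists y, 2 < #|[set x | f x == y]|]) => [/existsP//|].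
rewrite negb_exists => /forallP Hy.
have: #|T| <= 2 * #|U|.
  rewrite -sum1_card (partition_big f predT) //=.
  rewrite mulnC -sum_nat_const; apply: leq_sum => y _.
  move: (Hy y); rewrite -leqNgt => Hl; apply: leq_trans Hl.
  rewrite -sum1_card; apply: eq_leq; apply: eq_bigl => x; by rewrite inE.
by rewrite leqNgt H.
Qed.

Definition symd (T : finType) (S1 S2 : {set T}) := (S1 :\: S2) :|: (S2 :\: S1).

Lemma in_symd (T : finType) (S1 S2 : {set T}) j :
  (j \in symd S1 S2) = (j \in S1) (+) (j \in S2).
Proof. by rewrite !inE; case: (j \in S1); case: (j \in S2). Qed.

Lemma cardE' (T : finType) (S : {set T}) : #|S| = \sum_j (j \in S : nat).
Proof.
rewrite -sum1_card big_mkcond /=; apply: eq_bigr => j _; by case: (j \in S).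
Qed.

Lemma odd_colsum_symd m n (A : 'M[bool]_(m, n)) S1 S2 i :
  odd (colsum A (symd S1 S2) i) = odd (colsum A S1 i) (+) odd (colsum A S2 i).
Proof.
have E: colsum A (symd S1 S2) i + 2 * \sum_j [&& j \in S1, j \in S2 & A i j]
   = colsum A S1 i + colsum A S2 i.
  rewrite !colsumE big_distrr /= -!big_split /=; apply: eq_bigr => j _.
  rewrite in_symd; case: (j \in S1); case: (j \in S2); by case: (A i j).
by rewrite -oddD -E oddD oddM /= addbF.
Qed.

Lemma symd_neq0 (T : finType) (S1 S2 : {set T}) : S1 != S2 -> symd S1 S2 != set0.
Proof.
move=> H; apply/set0Pn; case: (boolP [exists j, j \in symd S1 S2]) => [/existsP//|].
rewrite negb_exists => /forallP Hj; exfalso; move/negP: H; apply; apply/eqP/setP => j.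
by move: (Hj j); rewrite in_symd; case: (j \in S1); case: (j \in S2).
Qed.

Lemma upper m N (A : 'M[bool]_(m, N)) : m.+2 <= N -> epsA A <= (2 * N) %/ 3.
Proof.
move=> hmN.
pose f (S : {set 'I_N}) := [ffun i => odd (colsum A S i)].
have [y Hy] : exists y, 2 < #|[set x | f x == y]|.
  apply: fiber3; rewrite card_ffun card_bool card_ord.
  apply: (leq_trans _ (max_card (mem (powerset [set: 'I_N])))).
  by rewrite card_powerset cardsT card_ord -expnS ltn_exp2l.
case/card_gt2P: Hy => [S1 [S2 [S3 [[]]]]]; rewrite !inE => /eqP f1 /eqP f2 /eqP f3 [n12 n23 n31].
have ev : forall Sa Sb, Sa != Sb -> f Sa = f Sb -> even_set A (symd Sa Sb).
  move=> Sa Sb nab fab; rewrite /even_set symd_neq0 //=; apply/forallP => i.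
  rewrite odd_colsum_symd; move/ffunP: fab => /(_ i); rewrite /f !ffunE => ->.
  by rewrite addbb.
have e12 := ev _ _ n12 (etrans f1 (esym f2)).
have e23 := ev _ _ n23 (etrans f2 (esym f3)).
have e31 := ev _ _ n31 (etrans f3 (esym f1)).
have hsum : #|symd S1 S2| + #|symd S2 S3| + #|symd S3 S1| <= 2 * N.
  rewrite !cardE' -!big_split /=.
  have -> : 2 * N = \sum_(j : 'I_N) 2 by rewrite sum_nat_const card_ord mulnC.
  apply: leq_sum => j _; rewrite !in_symd.
  by case: (j \in S1); case: (j \in S2); case: (j \in S3).
have h1 := @bigmin_le _ (even_set A) (fun S : {set 'I_N} => #|S|) N.+1 _ e12.
have h2 := @bigmin_le _ (even_set A) (fun S : {set 'I_N} => #|S|) N.+1 _ e23.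
have h3 := @bigmin_le _ (even_set A) (fun S : {set 'I_N} => #|S|) N.+1 _ e31.
rewrite /epsA; move: h1 h2 h3 hsum.
set e := \big[minn/N.+1]_(S | even_set A S) #|S|.
move=> h1 h2 h3 hsum; lia.
Qed.

Lemma upperu m N (A : 'M[bool]_(m, N)) : m.+2 <= N -> uA A <= (2 * N) %/ 3.
Proof.
move=> hmN; apply: leq_trans (upper A hmN); rewrite /uA /epsA.
apply: bigmin_ge => [|S eS]; first apply: (big_ind (fun v => v <= N.+1)) => //.
  - by move=> a b Ha _; rewrite geq_min Ha.
  - by move=> S _; apply: leq_trans (max_card _) _; rewrite card_ord.
exact: bigmin_le (even_one_free eS).
Qed.

Definition A0 n : 'M[bool]_(n, n + 2) :=
  \matrix_(i < n, j < n + 2) (if (i : nat) == n.-1 then (j < 3)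
      else ((j : nat) == i + 3) || ((j : nat) == i %% 3)).

Lemma modlt n (hn : 0 < n) t : t %% 3 < n + 2.
Proof. have := ltn_pmod t (isT : 0 < 3); lia. Qed.

Definition oo n (hn : 0 < n) t : 'I_(n + 2) := Ordinal (modlt hn t).

Lemma oo_eq n (hn : 0 < n) a b : a %% 3 = b %% 3 -> oo hn a = oo hn b.
Proof. by move=> E; apply: val_inj; rewrite /= E. Qed.

Lemma cardR n t : #|[set c : 'I_(n + 2) | c %% 3 == t]| <= (n + 4) %/ 3.
Proof.
have hl : forall c : 'I_(n + 2), c %/ 3 < (n + 4) %/ 3.
  by move=> c; have := ltn_ord c; lia.
pose h (c : 'I_(n + 2)) : 'I_((n + 4) %/ 3) := Ordinal (hl c).
rewrite -(@card_in_imset _ _ h).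
  by apply: leq_trans (max_card _) _; rewrite card_ord.
move=> x y; rewrite !inE => /eqP hx /eqP hy /(congr1 val) /= E.
apply: val_inj; rewrite /= (divn_eq x 3) (divn_eq y 3) E hx hy //.
Qed.

Lemma lower n (hn : 0 < n) S : one_free_set (A0 n) S -> (2 * (n + 2)) %/ 3 <= #|S|.
Proof.
case/andP=> /set0Pn [c0 c0S] /forallP H1.
have const : forall c : 'I_(n + 2), (c \in S) = (oo hn c \in S).
  move=> c; case: (ltnP c 3) => hc.
    by congr (_ \in S); apply: val_inj; rewrite /= modn_small.
  have hi : c - 3 < n by have := ltn_ord c; lia.
  have := H1 (Ordinal hi); rewrite /colsum.
  have -> : [set j in S | A0 n (Ordinal hi) j] = [set j in S | (j == c) || (j == oo hn c)].
    apply/setP => j; rewrite !inE mxE /=.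
    have -> : (c - 3 == n.-1) = false by have := ltn_ord c; lia.
    have -> : (j == c) = (val j == c - 3 + 3) by rewrite -val_eqE /=; congr (_ == _); lia.
    have -> : (j == oo hn c) = (val j == (c - 3) %% 3) by rewrite -val_eqE /=; congr (_ == _); lia.
    by [].
  have ne : c != oo hn c by rewrite -val_eqE /=; have := ltn_pmod c (isT : 0 < 3); lia.
  case Hc: (c \in S); case Ho: (oo hn c \in S) => //.
    have -> : [set j in S | (j == c) || (j == oo hn c)] = [set c].
      apply/setP => j; rewrite !inE.
      case: (boolP (j == c)) => [/eqP->|jc]; first by rewrite Hc.
      case: (boolP (j == oo hn c)) => [/eqP->|jo]; last by rewrite andbF.
      by rewrite Ho.
    by rewrite cards1.
  have -> : [set j in S | (j == c) || (j == oo hn c)] = [set oo hn c].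
    apply/setP => j; rewrite !inE.
    case: (boolP (j == oo hn c)) => [/eqP->|jo]; first by rewrite Ho ?eqxx ?orbT.
    case: (boolP (j == c)) => [/eqP->|jc]; last by rewrite andbF.
    by rewrite Hc.
  by rewrite cards1.
have link : forall t, oo hn t \in S -> (oo hn (t + 1) \in S) || (oo hn (t + 2) \in S).
  move=> t Ht; case: (boolP (oo hn (t + 1) \in S)) => // N1.
  case: (boolP (oo hn (t + 2) \in S)) => // N2; exfalso.
  have hr : n.-1 < n by lia.
  have := H1 (Ordinal hr); rewrite /colsum.
  have -> : [set j in S | A0 n (Ordinal hr) j] = [set oo hn t].
    apply/setP => j; rewrite !inE mxE /= eqxx.
    apply/idP/idP.
      case/andP=> jS j3; have := jS; rewrite const => jS'.
      have Ej : val j = j %% 3 by rewrite modn_small.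
      case: (boolP (j %% 3 == (t + 1) %% 3)) => [/eqP E|n1].
        by move: N1; rewrite -(oo_eq hn E) jS'.
      case: (boolP (j %% 3 == (t + 2) %% 3)) => [/eqP E|n2].
        by move: N2; rewrite -(oo_eq hn E) jS'.
      by rewrite -val_eqE /=; apply/eqP; lia.
    move/eqP => ->; rewrite Ht /=; exact: ltn_pmod.
  by rewrite cards1.
have key : forall u, oo hn u \in S -> oo hn (u + 1) \in S ->
    ~: [set c : 'I_(n + 2) | c %% 3 == (u + 2) %% 3] \subset S.
  move=> u Hu Hu1; apply/subsetP => c; rewrite !inE const => nc.
  case: (boolP (c %% 3 == u %% 3)) => [/eqP E|n1].
    by rewrite (oo_eq hn E).
  have E : c %% 3 = (u + 1) %% 3 by lia.
  by rewrite (oo_eq hn E).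
have hc0 : oo hn c0 \in S by rewrite -const.
have [u [Hu Hu1]] : exists u, oo hn u \in S /\ oo hn (u + 1) \in S.
  case/orP: (link _ hc0) => H; first by exists c0.
  exists (c0 + 2); split => //; rewrite -addnA; rewrite (@oo_eq _ hn (c0 + 3) c0) //.
  by rewrite modnDr.
pose R := [set c : 'I_(n + 2) | c %% 3 == (u + 2) %% 3].
have sub : #|~: R| <= #|S| := subset_leq_card (key u Hu Hu1).
have cC : #|R| + #|~: R| = n + 2 by rewrite cardsC card_ord.
have cR : #|R| <= (n + 4) %/ 3 := cardR n ((u + 2) %% 3).
move: sub cC cR; generalize #|R| #|~: R| => a b; lia.
Qed.

Theorem theorem7p1 (n : nat) : 0 < n ->
  u_mn n (n + 2) = ((2 * n + 4) %/ 3)%N /\ eps_mn n (n + 2) = ((2 * n + 4) %/ 3)%N.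
Proof.
move=> hn.
have -> : (2 * n + 4) %/ 3 = (2 * (n + 2)) %/ 3 by congr (_ %/ _); lia.
have hmN : n.+2 <= n + 2 by rewrite addn2.
have hdef : (2 * (n + 2)) %/ 3 <= (n + 2).+1 by lia.
split; apply/eqP; rewrite eqn_leq; apply/andP; split.
- by apply/bigmax_leqP => A _; exact: upperu.
- apply: leq_trans (leq_bigmax (A0 n)); apply: bigmin_ge => // S; exact: lower.
- by apply/bigmax_leqP => A _; exact: upper.
- apply: leq_trans (leq_bigmax (A0 n)); apply: bigmin_ge => // S HS.
  exact: lower (even_one_free HS).
Qed.
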